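(* Let $\varphi$ be a primitive morphism on a finite alphabet $A$, let $\mathcal{L}_\varphi$ be the language generated by $\varphi$, and let ${\rm S}:\mathcal{L}_\varphi\to\mathbb{Z}\times\mathbb{Z}$ be a homomorphism. If the drift $\Delta_\varphi({\rm S})=\sum_{a\in A}\mu_\varphi(a){\rm S}(a)$ is not $(0,0)$, then $(\mathbb{Z}\times\mathbb{Z})\setminus{\rm S}(\mathcal{L}_\varphi)$ is infinite.
   Context: A morphism $\varphi:A^*\to A^*$ is primitive if there is $k\ge1$ such that for all letters $a,b\in A$ the letter $b$ occurs in $\varphi^k(a)$. The language $\mathcal{L}_\varphi$ generated by $\varphi$ is the set of all nonempty finite words occurring as factors of $\varphi^n(a)$ for some $n\ge0$ and some $a\in A$. For a primitive morphism, $\mu_\varphi(a)$ denotes the frequency of the letter $a$ (under the unique invariant probability measure of the associated substitution subshift); equivalently, $(\mu_\varphi(a))_{a\in A}$ is the positive Perron–Frobenius eigenvector, normalized to have sum $1$, of the incidence matrix $M$ with $M_{a,b}$ = number of occurrences of $a$ in $\varphi(b)$. A homomorphism ${\rm S}:\mathcal{L}_\varphi\to\mathbb{Z}\times\mathbb{Z}$ is a map with ${\rm S}(w_1\cdots w_n)={\rm S}(w_1)+\cdots+{\rm S}(w_n)$, determined by the vectors ${\rm S}(a)$, $a\in A$. *)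

(* Defs.v *)
From mathcomp Require Import all_boot all_order all_algebra.
From mathcomp Require Import all_classical all_reals.
Set Implicit Arguments. Unset Strict Implicit. Unset Printing Implicit Defensive.
Import Order.TTheory GRing.Theory Num.Theory.
Local Open Scope ring_scope.

Definition morph_word (A : finType) (phi : A -> seq A) (w : seq A) : seq A :=
  flatten (map phi w).

Definition morph_iter (A : finType) (phi : A -> seq A) (n : nat) (w : seq A) : seq A :=
  iter n (morph_word phi) w.

Definition primitive (A : finType) (phi : A -> seq A) : Prop :=
  exists k : nat, (0 < k)%N /\ forall a b : A, b \in morph_iter phi k [:: a].

Definition in_language (A : finType) (phi : A -> seq A) (w : seq A) : Prop :=
  w != [::] /\ exists (n : nat) (a : A), infix w (morph_iter phi n [:: a]).

Definition incidence (A : finType) (phi : A -> seq A) (a b : A) : nat :=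
  count_mem a (phi b).

(* mu is the letter-frequency vector: the positive Perron-Frobenius eigenvector
   of the incidence matrix, normalized to sum 1.  (For a primitive matrix the
   positive eigenvector is unique up to scaling, so this characterizes mu.) *)
Definition letter_frequency (R : realType) (A : finType) (phi : A -> seq A)
    (mu : A -> R) : Prop :=
  [/\ forall a, 0 < mu a,
      \sum_(a : A) mu a = 1 &
      exists lambda : R, forall a : A,
        \sum_(b : A) (incidence phi a b)%:R * mu b = lambda * mu a].

Definition hom_word (A : finType) (S : A -> int * int) (w : seq A) : int * int :=
  ((\sum_(x <- w) (S x).1)%R, (\sum_(x <- w) (S x).2)%R).

Definition drift (R : realType) (A : finType) (mu : A -> R) (S : A -> int * int)
    : R * R :=
  (\sum_(a : A) mu a * ((S a).1)%:~R, \sum_(a : A) mu a * ((S a).2)%:~R).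

Definition hom_image (A : finType) (phi : A -> seq A) (S : A -> int * int)
    (v : int * int) : Prop :=
  exists w : seq A, in_language phi w /\ hom_word S w = v.

Definition finite_subset (X : int * int -> Prop) : Prop :=
  exists s : seq (int * int), forall v, X v -> v \in s.

(* Main.v *)
Require Import Defs.
From mathcomp Require Import all_boot all_order all_algebra.
From mathcomp Require Import all_classical all_reals.
From mathcomp Require Import ring lra.
Import Order.TTheory GRing.Theory Num.Theory.
Set Implicit Arguments. Unset Strict Implicit. Unset Printing Implicit Defensive.
Local Open Scope ring_scope.

Lemma ex_max (R : realType) (A : finType) (t : A -> R) (a0 : A) :
  exists c, forall a, t a <= t c.
Proof. by case: (@arg_maxP _ _ A a0 xpredT t isT) => c _ H; exists c => a; apply: H. Qed.

Lemma ex_min (R : realType) (A : finType) (t : A -> R) (a0 : A) :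
  exists c, forall a, t c <= t a.
Proof. by case: (@arg_minP _ _ A a0 xpredT t isT) => c _ H; exists c => a; apply: H. Qed.

Lemma le_sum1 (R : realType) (A : finType) (F : A -> R) (c : A) :
  (forall a, 0 <= F a) -> F c <= \sum_a F a.
Proof. by move=> H; rewrite (bigD1 c) //= lerDl sumr_ge0. Qed.

Lemma step_lem (R : realType) (A : finType) (w : A -> A -> R) (d : R) (t : A -> R)
   (m M : R) (a0 : A) :
  (forall a c, d <= w a c) -> (forall a, \sum_c w a c = 1) -> 0 <= d ->
  (forall a, m <= t a <= M) ->
  exists m' M', m <= m' /\ M' - m' <= (1 - d) * (M - m) /\
     forall a, m' <= \sum_c w a c * t c <= M'.
Proof.
move=> hd hs d0 ht.
have w0 : forall a c, 0 <= w a c by move=> a c; apply: le_trans (hd a c).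
have d1 : d <= 1 by rewrite -(hs a0); apply: le_trans (hd a0 a0) (le_sum1 _ (w0 a0)).
have [cM hM] := ex_max t a0; have [cm hm] := ex_min t a0.
have hmM : t cm <= t cM by [].
exists (t cm + d * (t cM - t cm)), (t cM - d * (t cM - t cm)).
have := ht cm; have := ht cM; case/andP=> h1 h2; case/andP=> h3 h4.
split; first by nra.
split; first by nra.
move=> a.
have E1 : \sum_c w a c * t c = t cm + \sum_c w a c * (t c - t cm).
  under [X in _ = _ + X]eq_bigr do rewrite mulrBr.
  by rewrite sumrB -mulr_suml hs mul1r addrC subrK.
have E2 : \sum_c w a c * t c = t cM - \sum_c w a c * (t cM - t c).
  under [X in _ = _ - X]eq_bigr do rewrite mulrBr.
  by rewrite sumrB -mulr_suml hs mul1r opprB addrC subrK.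
apply/andP; split.
- rewrite E1 lerD2l.
  have := @le_sum1 _ _ (fun c => w a c * (t c - t cm)) cM.
  have := hd a cM; have := hm cM.
  move=> X Y Z; apply: le_trans (Z _).
    by apply: ler_wpM2r; [rewrite subr_ge0|].
  by move=> c; apply: mulr_ge0 => //; rewrite subr_ge0.
- rewrite E2 lerD2l lerN2.
  have := @le_sum1 _ _ (fun c => w a c * (t cM - t c)) cm.
  have := hd a cm.
  move=> Y Z; apply: le_trans (Z _).
    by apply: ler_wpM2r; [rewrite subr_ge0|].
  by move=> c; apply: mulr_ge0 => //; rewrite subr_ge0.
Qed.


Lemma iter_lem (R : realType) (A : finType) (w : A -> A -> R) (d : R)
   (t : nat -> A -> R) (m0 M0 : R) (a0 : A) :
  (forall a c, d <= w a c) -> (forall a, \sum_c w a c = 1) -> 0 <= d -> d <= 1 ->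
  (forall j a, t j.+1 a = \sum_c w a c * t j c) ->
  (forall a, m0 <= t 0%N a <= M0) ->
  forall j, exists m M, m0 <= m /\ M - m <= (1 - d) ^+ j * (M0 - m0) /\
     forall a, m <= t j a <= M.
Proof.
move=> hd hs d0 d1 hrec h0; elim=> [|j [m [M [h1 [h2 h3]]]]].
  by exists m0, M0; rewrite expr0 mul1r; split.
have [m' [M' [k1 [k2 k3]]]] := step_lem a0 hd hs d0 h3.
exists m', M'; split; first by apply: le_trans k1.
split; last by move=> a; rewrite hrec.
apply: le_trans k2 _; rewrite exprS -mulrA; apply: ler_wpM2l => //; lra.
Qed.

Lemma geom_lem (R : realType) (d : R) (j : nat) :
  0 <= d -> d <= 1 -> (1 - d) ^+ j * (1 + j%:R * d) <= 1.
Proof.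
move=> d0 d1; elim: j => [|j IH]; first by rewrite expr0 mul0r addr0 mul1r.
have hp : 0 <= (1 - d) ^+ j by apply: exprn_ge0; lra.
rewrite exprS -natr1.
have hj : 0 <= j%:R :> R by [].
have h2 : (1 - d) * (1 + (j%:R + 1) * d) <= 1 + j%:R * d by nra.
apply: le_trans IH.
rewrite mulrAC [X in _ <= X]mulrC; apply: ler_wpM2r => //.
Qed.

Lemma geom_small (R : realType) (d K e : R) :
  0 < d -> d <= 1 -> 0 <= K -> 0 < e -> exists j : nat, (1 - d) ^+ j * K < e.
Proof.
move=> d0 d1 K0 e0.
set y := K / (d * (e / 2)).
have y0 : 0 <= y by rewrite /y divr_ge0 // mulr_ge0 // ?divr_ge0 //; lra.
have := archi_boundP y0; set j := Num.Def.archi_bound y => hj.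
exists j.
have hp : 0 <= (1 - d) ^+ j by apply: exprn_ge0; lra.
have g := geom_lem j (ltW d0) d1.
have hK : K <= j%:R * d * (e / 2).
  have : K = y * (d * (e / 2)) by rewrite /y divfK // mulf_neq0 //; lra.
  move=> ->; rewrite -mulrA; apply: ler_wpM2r; first by apply: mulr_ge0; lra.
  exact: ltW.
apply: (@le_lt_trans _ _ ((1 - d) ^+ j * (j%:R * d * (e / 2)))).
  exact: ler_wpM2l.
have : 0 <= j%:R :> R by [].
nra.
Qed.


Lemma pos_lem (R : realType) (A : finType) (mu : A -> R) (P : A -> A -> R) (L : R)
   (g : A -> R) (U : R) (a0 : A) :
  (forall a, 0 < mu a) -> (forall a, mu a <= 1) -> (forall a c, 1 <= P a c) ->
  (forall a, \sum_c P a c * mu c = L * mu a) -> 0 < \sum_a g a * mu a ->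
  exists j : nat, forall x : nat -> A -> R,
    (forall i a, x i.+1 a = \sum_c P a c * x i c) -> (forall a, 1 <= x 0%N a <= U) ->
    0 < \sum_a g a * x j a.
Proof.
move=> mu0 mu1 P1 hL D0.
have L0 : 0 < L.
  have : 0 < \sum_c P a0 c * mu c.
    apply: lt_le_trans (@le_sum1 _ _ (fun c => P a0 c * mu c) a0 _).
      by apply: mulr_gt0 => //; apply: lt_le_trans (P1 a0 a0).
    by move=> c; apply: mulr_ge0; [apply: le_trans (P1 a0 c)|apply: ltW].
  by rewrite hL pmulr_lgt0.
have [cm hm] := ex_min mu a0.
set d := mu cm / L.
set w := fun a c => P a c * mu c / (L * mu a).
have hd : forall a c, d <= w a c.
  move=> a c; rewrite /d /w.
  have -> : P a c * mu c / (L * mu a) = (P a c / mu a) * (mu c / L).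
    by field; apply/andP; split; apply: lt0r_neq0.
  rewrite -[X in X <= _]mul1r; apply: ler_pM.
  - by [].
  - by apply: divr_ge0 => //; apply: ltW.
  - by rewrite ler_pdivlMr // mul1r; apply: le_trans (P1 a c).
  - by rewrite ler_pM2r ?invr_gt0.
have hs : forall a, \sum_c w a c = 1.
  move=> a; rewrite /w -mulr_suml hL divff //.
  by apply: lt0r_neq0; apply: mulr_gt0.
have d0 : 0 < d by apply: divr_gt0.
have d1 : d <= 1.
  have w0 : forall c, 0 <= w a0 c by move=> c; apply: le_trans (hd a0 c); apply: ltW.
  rewrite -(hs a0); exact: le_trans (hd a0 a0) (le_sum1 a0 w0).
set D : R := \sum_a g a * mu a.
set E : R := \sum_a `|g a| * mu a.
have E0 : 0 <= E by apply: sumr_ge0 => a _; apply: mulr_ge0 => //; apply: ltW.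
set K : R := `|U / mu cm - 1|.
have [j hj] := geom_small d0 d1 (normr_ge0 (U / mu cm - 1))
   (divr_gt0 D0 (ltr_wpDl E0 ltr01)).
exists j => x hx hx0.
set t := fun i a => x i a / (L ^+ i * mu a).
have Li : forall i, 0 < L ^+ i by move=> i; apply: exprn_gt0.
have ht : forall i a, t i.+1 a = \sum_c w a c * t i c.
  move=> i a; rewrite /t /w hx mulr_suml; apply: eq_bigr => c _.
  rewrite exprS; field.
  by rewrite !lt0r_neq0 //; apply: Li.
have ht0 : forall a, 1 <= t 0%N a <= U / mu cm.
  move=> a; have /andP[x1 x2] := hx0 a; rewrite /t expr0 mul1r; apply/andP; split.
    by rewrite ler_pdivlMr // mul1r; apply: le_trans x1.
  rewrite ler_pdivrMr // mulrAC ler_pdivlMr //.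
  apply: ler_pM => //; first by apply: le_trans x1.
  by apply: ltW.
have [m [M [k1 [k2 k3]]]] := iter_lem a0 hd hs (ltW d0) d1 ht ht0 j.
have ex : forall a, x j a = L ^+ j * (mu a * t j a).
  by move=> a; rewrite /t; field; rewrite !lt0r_neq0 //; apply: Li.
have -> : \sum_a g a * x j a = L ^+ j * \sum_a g a * mu a * t j a.
  by rewrite mulr_sumr; apply: eq_bigr => a _; rewrite ex; ring.
apply: mulr_gt0 => //.
have lb : forall a, m * (g a * mu a) - `|g a| * mu a * (M - m) <= g a * mu a * t j a.
  move=> a; have /andP[l1 l2] := k3 a; have ma := mu0 a.
  case: (lerP 0 (g a)) => hg.
    rewrite ger0_norm //.
    have gm : 0 <= g a * mu a by apply: mulr_ge0 => //; apply: ltW.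
    have q1 : 0 <= g a * mu a * (t j a - m) by apply: mulr_ge0 => //; lra.
    have q2 : 0 <= g a * mu a * (M - m) by apply: mulr_ge0 => //; lra.
    rewrite mulrBr mulrBr in q1 q2 *; lra.
  rewrite ltr0_norm //.
  have gm : 0 <= - g a * mu a by apply: mulr_ge0; [lra|apply: ltW].
  have q1 : 0 <= - g a * mu a * (M - t j a) by apply: mulr_ge0 => //; lra.
  rewrite !mulrBr !mulNr in q1 *; lra.
apply: lt_le_trans (ler_sum _ (fun a _ => lb a)).
rewrite sumrB -mulr_sumr -mulr_suml -/D -/E.
have hK : M - m <= (1 - d) ^+ j * K.
  apply: le_trans k2 _; apply: ler_wpM2l; first by apply: exprn_ge0; lra.
  exact: ler_norm.
have hp : 0 <= (1 - d) ^+ j by apply: exprn_ge0; lra.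
have : (E + 1) * ((1 - d) ^+ j * K) < D.
  by move: hj; rewrite ltr_pdivlMr ?ltr_wpDl // mulrC.
set z := (1 - d) ^+ j * K => hz.
have z0 : 0 <= z.
  have /andP[u1 u2] := k3 a0; apply: le_trans hK; rewrite subr_ge0; exact: le_trans u1 u2.
have q1 : E * (M - m) <= E * z by apply: ler_wpM2l.
have q2 : 0 <= (m - 1) * D by apply: mulr_ge0; [lra|exact: ltW D0].
rewrite mulrDl mul1r in hz; rewrite mulrBl mul1r in q2.
have q3 : 0 <= E * z by apply: mulr_ge0.
lra.
Qed.


Lemma mw_cat (A : finType) (phi : A -> seq A) u v :
  morph_word phi (u ++ v) = morph_word phi u ++ morph_word phi v.
Proof. by rewrite /morph_word map_cat flatten_cat. Qed.

Lemma mi_cat (A : finType) (phi : A -> seq A) k u v :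
  morph_iter phi k (u ++ v) = morph_iter phi k u ++ morph_iter phi k v.
Proof. by elim: k => [|k IH] //=; rewrite /morph_iter /= -!/(morph_iter _ _ _) IH mw_cat. Qed.

Lemma mi_nil (A : finType) (phi : A -> seq A) k : morph_iter phi k [::] = [::].
Proof. by elim: k => [|k IH] //=; rewrite /morph_iter /= -!/(morph_iter _ _ _) IH. Qed.

Lemma mi_flat (A : finType) (phi : A -> seq A) k u :
  morph_iter phi k u = flatten (map (fun c => morph_iter phi k [:: c]) u).
Proof.
elim: u => [|c u IH]; first by rewrite mi_nil.
by rewrite -cat1s mi_cat IH.
Qed.

Lemma sum_seq_count (R : realType) (A : finType) (F : A -> R) (u : seq A) :
  \sum_(c <- u) F c = \sum_c (count_mem c u)%:R * F c.
Proof.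
elim: u => [|x u IH]; first by rewrite big_nil big1 // => c _; rewrite mul0r.
rewrite big_cons IH /=.
under [X in _ = X]eq_bigr do rewrite natrD mulrDl.
rewrite big_split /=; congr (_ + _).
rewrite (bigD1 x) //= eqxx mul1r big1 ?addr0 // => c /negbTE hc.
by rewrite eq_sym hc mul0r.
Qed.

Definition Nr (R : realType) (A : finType) (phi : A -> seq A) k (a b : A) : R :=
  (count_mem a (morph_iter phi k [:: b]))%:R.

Lemma count_mi (A : finType) (phi : A -> seq A) k a u :
  count_mem a (morph_iter phi k u) = (\sum_(c <- u) count_mem a (morph_iter phi k [:: c]))%N.
Proof.
elim: u => [|c u IH]; first by rewrite mi_nil big_nil.
by rewrite -cat1s mi_cat count_cat IH big_cons.
Qed.

Lemma Nr_comp (R : realType) (A : finType) (phi : A -> seq A) k j a b :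
  Nr R phi (k + j) a b = \sum_c Nr R phi j c b * Nr R phi k a c.
Proof.
rewrite /Nr /morph_iter iterD -/(morph_iter _ _ _) -/(morph_iter _ _ _).
rewrite count_mi natr_sum sum_seq_count.
by apply: eq_bigr.
Qed.

Lemma Nr_eigen (R : realType) (A : finType) (phi : A -> seq A) (mu : A -> R) lam :
  (forall a, \sum_b (incidence phi a b)%:R * mu b = lam * mu a) ->
  forall k a, \sum_b Nr R phi k a b * mu b = lam ^+ k * mu a.
Proof.
move=> he; elim=> [|k IH] a.
  rewrite expr0 mul1r (bigD1 a) //= big1 ?addr0 /Nr /=.
    by rewrite eqxx mul1r.
  by move=> b /negbTE hb; rewrite /Nr /= ?hb ?(eq_sym b) ?hb mul0r.
have N1 : forall c b, Nr R phi 1 c b = (incidence phi c b)%:R.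
  by move=> c b; rewrite /Nr /morph_iter /= /morph_word /= cats0.
under eq_bigr do rewrite -addn1 Nr_comp mulr_suml.
rewrite exchange_big /=.
have E : forall c, \sum_b Nr R phi 1 c b * Nr R phi k a c * mu b =
    Nr R phi k a c * (lam * mu c).
  move=> c; rewrite -he mulr_sumr; apply: eq_bigr => b _; rewrite N1; ring.
under eq_bigr do rewrite E mulrCA.
by rewrite -mulr_sumr IH exprSr; ring.
Qed.


Lemma G_lb (R : realType) (A : finType) (g : A -> R) (gm : R) (w : seq A) :
  (forall x, `|g x| <= gm) -> - ((size w)%:R * gm) <= \sum_(x <- w) g x.
Proof.
move=> hg; elim: w => [|x w IH]; first by rewrite big_nil mul0r oppr0.
rewrite big_cons /= -addn1 natrD mulrDl mul1r.
have := hg x; rewrite ler_norml => /andP[h1 h2]; lra.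
Qed.



Lemma G_lb2 (R : realType) (A : finType) (g : A -> R) (gm L : R) (w : seq A) :
  (forall x, `|g x| <= gm) -> 0 <= gm -> (size w)%:R <= L -> - (L * gm) <= \sum_(x <- w) g x.
Proof.
move=> hg g0 hs; apply: le_trans (G_lb w hg); rewrite lerN2.
exact: ler_wpM2r.
Qed.

Lemma pre_lem (R : realType) (A : finType) (g : A -> R) (gm L : R) (psi : A -> seq A) :
  (forall x, `|g x| <= gm) -> 0 <= gm -> 0 <= L ->
  (forall c, (size (psi c))%:R <= L) -> (forall c, 0 <= \sum_(x <- psi c) g x) ->
  forall u m, - (L * gm) <= \sum_(x <- take m (flatten (map psi u))) g x.
Proof.
move=> hg g0 L0' hL hp; elim=> [|c u IH] m.
  by rewrite /= big_nil oppr_le0; apply: mulr_ge0.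
rewrite /= take_cat; case: ifP => _.
  apply: G_lb2 => //; apply: le_trans (hL c); rewrite ler_nat size_take_min.
  exact: geq_minr.
rewrite big_cat /=; have := IH (m - size (psi c))%N; have := hp c; lra.
Qed.

Lemma lr1 (R : realType) (a s : R) : -a <= s -> 0 <= a -> -(2 * a) <= s.
Proof. lra. Qed.
Lemma lr2 (R : realType) (a s t : R) : -a <= s -> -a <= t -> -(2 * a) <= s + t.
Proof. lra. Qed.

Lemma inf_lem (R : realType) (A : finType) (g : A -> R) (gm L : R) (psi : A -> seq A) :
  (forall x, `|g x| <= gm) -> 0 <= gm -> 0 <= L ->
  (forall c, (size (psi c))%:R <= L) -> (forall c, 0 <= \sum_(x <- psi c) g x) ->
  forall u i m, - (2 * L * gm) <= \sum_(x <- take m (drop i (flatten (map psi u)))) g x.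
Proof.
move=> hg g0 L0' hL hp.
have L0 : forall c : A, 0 <= L * gm.
  by move=> c; apply: mulr_ge0 => //; apply: le_trans (hL c).
elim=> [|c u IH] i m.
  rewrite /= big_nil oppr_le0 -mulrA; apply: mulr_ge0 => //; exact: mulr_ge0.
rewrite /= drop_cat; case: ifP => _; last by apply: IH.
rewrite take_cat; case: ifP => _.
  rewrite -mulrA; apply: lr1 (L0 c).
    apply: G_lb2 => //; apply: le_trans (hL c); rewrite ler_nat size_take_min size_drop.
    by apply: leq_trans (geq_minr _ _) (leq_subr _ _).
rewrite big_cat -mulrA; apply: lr2; last first.
  exact: (pre_lem hg g0 L0' hL hp u (m - size (drop i (psi c)))%N).
  apply: G_lb2 => //; apply: le_trans (hL c); rewrite ler_nat size_drop.
  exact: leq_subr.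
Qed.


Lemma ex_k (R : realType) (x Bd : R) : x != 0 -> exists k : int, x * k%:~R < Bd.
Proof.
move=> hx; set y := Bd / x.
have xy : x * y = Bd by rewrite /y mulrC divfK.
case: (ltrgtP x 0) => hs; last by rewrite hs eqxx in hx.
- exists (Num.Def.ceil y + 1); rewrite intrD.
  have := ceil_itv y => /andP[_ h2].
  have : x * (Num.Def.ceil y)%:~R <= x * y by rewrite ler_nM2l.
  rewrite mulrDr mulr1; lra.
- exists (Num.Def.floor y - 1); rewrite intrB.
  have := floor_itv y => /andP[h1 _].
  have : x * (Num.Def.floor y)%:~R <= x * y by rewrite ler_pM2l.
  rewrite mulrBr mulr1; lra.
Qed.

Lemma ex_v (R : realType) (d1 d2 Bd : R) : d1 != 0 \/ d2 != 0 ->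
  exists v : int * int, d1 * v.1%:~R + d2 * v.2%:~R < Bd.
Proof.
case=> h.
  by have [k hk] := ex_k Bd h; exists (k, 0%R); rewrite /= mulr0z mulr0 addr0.
by have [k hk] := ex_k Bd h; exists (0%R, k); rewrite /= mulr0z mulr0 add0r.
Qed.

Lemma le_seq_norm (R : realType) (f : int * int -> R) (s : seq (int * int)) v :
  v \in s -> `|f v| <= \sum_(u <- s) `|f u|.
Proof.
elim: s => [|u s IH] //; rewrite in_cons big_cons => /orP[/eqP->|h].
  by rewrite lerDl sumr_ge0.
by apply: le_trans (IH h) _; rewrite lerDr.
Qed.

Lemma sqpos (R : realType) (d1 d2 : R) : d1 != 0 \/ d2 != 0 -> 0 < d1 * d1 + d2 * d2.
Proof.
case=> h.
  have : 0 < d1 * d1 by case: (ltrgtP d1 0) h => hs; rewrite ?hs ?eqxx //; nra.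
  nra.
have : 0 < d2 * d2 by case: (ltrgtP d2 0) h => hs; rewrite ?hs ?eqxx //; nra.
nra.
Qed.

Unset Implicit Arguments.
Theorem proposition10 (R : realType) (A : finType) (phi : A -> seq A)
    (S : A -> int * int) (mu : A -> R) :
  primitive phi ->
  letter_frequency phi mu ->
  drift mu S != (0, 0) ->
  ~ finite_subset (fun v => ~ hom_image phi S v).
Proof.
move=> [p [p0 hprim]] [mu0 mus [lam hlam]] hd [s hs].
have [a0 _] : exists a0 : A, True.
  case: (pickP (fun _ : A => true)) => [a _|h]; first by exists a.
  by move: mus; rewrite big_pred0 // => /eqP; rewrite eq_sym oner_eq0.
have mu1 : forall a, mu a <= 1.
  by move=> a; rewrite -mus; apply: le_sum1 => b; apply: ltW.
move: hd; rewrite /drift.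
set d1 := \sum_a mu a * ((S a).1)%:~R.
set d2 := \sum_a mu a * ((S a).2)%:~R => hd.
have hd' : d1 != 0 \/ d2 != 0.
  case: (eqVneq d1 0) => [e1|]; last by left.
  case: (eqVneq d2 0) => [e2|]; last by right.
  by move: hd; rewrite e1 e2 eqxx.
pose g a := d1 * ((S a).1)%:~R + d2 * ((S a).2)%:~R.
have Dpos : 0 < \sum_a g a * mu a.
  have -> : \sum_a g a * mu a = d1 * d1 + d2 * d2.
    rewrite {2}/d1 {2}/d2 !mulr_sumr -big_split; apply: eq_bigr => a _.
    rewrite /g /=; ring.
  exact: sqpos.
have hP1 : forall a c, 1 <= Nr R phi p a c.
  move=> a c; have := hprim c a; rewrite -has_pred1 has_count => h.
  by rewrite /Nr ler1n.
have hEig := Nr_eigen hlam p.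
set U := \sum_a \sum_b Nr R phi p a b.
have [j hj] := @pos_lem R A mu (Nr R phi p) (lam ^+ p) g U a0 mu0 mu1 hP1 hEig Dpos.
set K := (j.+1 * p)%N.
have hpos : forall c, 0 < \sum_a g a * Nr R phi K a c.
  move=> c; apply: (hj (fun i a => Nr R phi (i.+1 * p) a c)).
    move=> i a /=; rewrite (mulSn i.+1 p) Nr_comp; apply: eq_bigr => b _.
    by rewrite mulrC.
  move=> a /=; rewrite mul1n; apply/andP; split; first exact: hP1.
  have N0 : forall k a b, 0 <= Nr R phi k a b by move=> *; rewrite /Nr ler0n.
  apply: le_trans (@le_sum1 _ _ (fun b => Nr R phi p a b) c (N0 p a)) _.
  apply: (@le_sum1 _ _ (fun a => \sum_b Nr R phi p a b) a).
  by move=> a'; apply: sumr_ge0 => b _.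
pose psi c := morph_iter phi K [:: c].
have hp : forall c, 0 <= \sum_(x <- psi c) g x.
  move=> c; rewrite sum_seq_count; apply: ltW; apply: lt_le_trans (hpos c) _.
  by rewrite le_eqVlt; apply/orP; left; apply/eqP; apply: eq_bigr => a _; rewrite mulrC.
set L := \sum_c (size (psi c))%:R : R.
have hL : forall c, (size (psi c))%:R <= L.
  by move=> c; apply: (@le_sum1 _ _ (fun c => (size (psi c))%:R : R) c) => c'.
have L0 : 0 <= L by apply: sumr_ge0.
set gm := \sum_a `|g a|.
have hg : forall x, `|g x| <= gm by move=> x; apply: (@le_sum1 _ _ (fun a => `|g a|)).
have g0 : 0 <= gm by apply: sumr_ge0.
set B := \sum_(i < K) \sum_a (size (morph_iter phi i [:: a]))%:R : R.
have B0 : 0 <= B by apply: sumr_ge0 => i _; apply: sumr_ge0.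
set C := 2 * L * gm + B * gm.
have C0 : 0 <= C by rewrite /C; apply: addr_ge0; apply: mulr_ge0 => //; apply: mulr_ge0.
have claim : forall w, in_language phi w -> - C <= \sum_(x <- w) g x.
  move=> w [_ [n [a /infixP [s1 [s2 hE]]]]].
  case: (leqP K n) => hn.
    have hF : morph_iter phi n [:: a] = flatten (map psi (morph_iter phi (n - K) [:: a])).
      by rewrite -mi_flat /morph_iter -iterD subnKC.
    have -> : w = take (size w) (drop (size s1) (morph_iter phi n [:: a])).
      by rewrite hE drop_size_cat // take_size_cat.
    rewrite hF; apply: le_trans (inf_lem hg g0 L0 hL hp _ _ _).
    rewrite /C lerN2 lerDl; exact: mulr_ge0.
  apply: le_trans (@G_lb2 _ _ g gm B w hg g0 _).
    rewrite /C lerN2 lerDr; apply: mulr_ge0 => //; exact: mulr_ge0.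
  have h1 : (size w <= size (morph_iter phi n [:: a]))%N.
    by rewrite hE !size_cat addnCA leq_addr.
  apply: le_trans (_ : (size (morph_iter phi n [:: a]))%:R <= B).
    by rewrite ler_nat.
  have N0 : forall i b, 0 <= (size (morph_iter phi i [:: b]))%:R :> R by [].
  apply: le_trans (@le_sum1 _ _ (fun b => (size (morph_iter phi n [:: b]))%:R : R) a (N0 n)) _.
  apply: (@le_sum1 _ _ (fun i : 'I_K => \sum_b (size (morph_iter phi i [:: b]))%:R : R) (Ordinal hn)).
  by move=> i; apply: sumr_ge0.
have hw : forall w, \sum_(x <- w) g x =
    d1 * (\sum_(x <- w) (S x).1)%:~R + d2 * (\sum_(x <- w) (S x).2)%:~R.
  elim=> [|x w IH]; first by rewrite !big_nil !mulr0z !mulr0 addr0.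
  by rewrite !big_cons IH !intrD /g; ring.
pose f (v : int * int) := d1 * v.1%:~R + d2 * v.2%:~R.
set T := \sum_(u <- s) `|f u|.
have T0 : 0 <= T by apply: sumr_ge0.
have [v hv] := ex_v (- C - T) hd'.
have nin : ~ hom_image phi S v.
  move=> [w [hw1 hw2]]; have := claim w hw1; rewrite hw.
  move: hv; rewrite -hw2 /hom_word /=; lra.
have := le_seq_norm f (hs v nin); rewrite -/T ler_norml => /andP[h1 _].
move: hv; rewrite -/(f v); lra.
Qed.
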